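(* Let $\theta_1,\theta_2,\dots\ge0$ be such that $I_0$ has radius of convergence $\rho\in(0,\infty]$, $I_0$ is strictly increasing on $[0,\rho)$ with $I_0(r)\to\infty$ as $r\uparrow\rho$, and for each $m\ge1$ let $r_m\in(0,\rho)$ be the unique solution of $I_0(r_m)=m$. Assume the saddle point approximation \[ h_m=\frac{e^{I_{-1}(r_m)}}{r_m^m\sqrt{2\pi I_1(r_m)}}\,(1+\varepsilon_m),\qquad \varepsilon_m\to0 \text{ as } m\to\infty. \] Then there are numbers $\delta_{n,j}$ with $\delta_{n,j}\to0$ as $n-j\to\infty$ such that for all $0\le j<n$, \[ \sqrt{\frac{I_1(r_n)}{I_1(r_{n-j})}}\,r_{n-j}^{\,j}\ \le\ \frac{h_{n-j}}{h_n}(1+\delta_{n,j})\ \le\ \sqrt{\frac{I_1(r_n)}{I_1(r_{n-j})}}\,r_n^{\,j}. \]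
   Context: For $\sigma\in\mathcal{S}_n$, $R_j(\sigma)$ is the number of cycles of length $j$; $h_0=1$ and $h_n=\frac1{n!}\sum_{\sigma\in\mathcal{S}_n}\prod_{j\ge1}\theta_j^{R_j(\sigma)}$. For real $\mu$, $I_\mu(z)=\sum_{n\ge1}n^\mu\theta_nz^n$; in particular the generating function satisfies $\sum_{n\ge0}h_nz^n=\exp I_{-1}(z)$.
   Formalization: Every $h_m$ with m ≥ 1 is also assumed strictly positive, a hypothesis absent from the saddle point assumptions. The statement above fails without it. *)

(* Defs.v *)
From mathcomp Require Import all_boot all_fingroup.
Set Implicit Arguments.
Unset Strict Implicit.
Unset Printing Implicit Defensive.

Definition cyc_count (n : nat) (s : 'S_n) (j : nat) : nat :=
  #|[set C in porbits s | #|C| == j]|.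

From Stdlib Require Import Reals ClassicalEpsilon.

(* h_n = (1/n!) * sum_{sigma in S_n} prod_{j>=1} theta_j^{R_j(sigma)}.
   Cycles have length <= n, so the product over j >= 1 reduces to 1 <= j <= n
   (the remaining factors are theta_j^0 = 1). *)
Definition h (theta : nat -> R) (n : nat) : R :=
  Rmult (Rinv (INR (n`!)))
    (\big[Rplus/R0]_(s : 'S_n)
        \big[Rmult/R1]_(1 <= j < n.+1) pow (theta j) (cyc_count s j)).

Local Open Scope R_scope.

Definition Iterm (theta : nat -> R) (mu z : R) (n : nat) : R :=
  match n with
  | O => 0
  | S _ => Rpower (INR n) mu * theta n * z ^ n
  end.

(* I_mu(z): the sum of the series (chosen by classical description when the
   series converges; only used at points where it converges). *)
Definition I (theta : nat -> R) (mu z : R) : R :=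
  epsilon (inhabits 0) (fun l => infinite_sum (Iterm theta mu z) l).

(* radius in (0, +oo]: None stands for +oo. *)
Definition below (rho : option R) (x : R) : Prop :=
  match rho with None => True | Some p => x < p end.

Definition is_radius (theta : nat -> R) (mu : R) (rho : option R) : Prop :=
  (forall z, below rho (Rabs z) -> exists l, infinite_sum (Iterm theta mu z) l) /\
  (match rho with
   | None => True
   | Some p => 0 < p /\
       forall z, p < Rabs z -> ~ exists l, infinite_sum (Iterm theta mu z) l
   end).

(* Main.v *)
Require Import Defs.
From Stdlib Require Import Reals Lra Lia ClassicalEpsilon.
Local Open Scope R_scope.

Lemma cv_const (t : R) : Un_cv (fun _ => t) t.
Proof. intros e He; exists 0%nat; intros; unfold Rdist; rewrite Rminus_diag, Rabs_R0; lra. Qed.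

Lemma I_val theta mu z l : infinite_sum (Iterm theta mu z) l -> I theta mu z = l.
Proof.
  intros H; unfold I.
  apply (uniqueness_sum (Iterm theta mu z)); [|exact H].
  apply epsilon_spec; eauto.
Qed.

Lemma exp_pow_nat (x : R) (k : nat) : exp x ^ k = exp (INR k * x).
Proof.
  induction k as [|k IH]; simpl.
  - rewrite Rmult_0_l, exp_0; reflexivity.
  - rewrite IH, <- exp_plus. f_equal. destruct k; simpl; ring.
Qed.

Lemma Iterm0 theta z k : (1 <= k)%nat -> Iterm theta 0 z k = theta k * z ^ k.
Proof.
  intros Hk; destruct k as [|k']; [lia|]. unfold Iterm.
  rewrite Rpower_O by (apply lt_0_INR; lia). ring.
Qed.

Lemma Itermm1 theta z k : (1 <= k)%nat -> Iterm theta (-1) z k = / INR k * theta k * z ^ k.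
Proof.
  intros Hk; destruct k as [|k']; [lia|]. unfold Iterm.
  replace (-1) with (- (1)) by ring.
  rewrite Rpower_Ropp, Rpower_1 by (apply lt_0_INR; lia). ring.
Qed.

Lemma Iterm_zero theta mu z : Iterm theta mu z 0 = 0.
Proof. reflexivity. Qed.

Lemma conv_m1 theta z l : (forall j, (1 <= j)%nat -> 0 <= theta j) -> 0 < z ->
  infinite_sum (Iterm theta 0 z) l -> exists l', infinite_sum (Iterm theta (-1) z) l'.
Proof.
  intros Ht Hz Hs.
  destruct (Rseries_CV_comp (Iterm theta (-1) z) (Iterm theta 0 z)) as [l' Hl'].
  - intros k. destruct k as [|k']. { rewrite !Iterm_zero; lra. }
    rewrite Iterm0, Itermm1 by lia.
    assert (Hp : 1 <= INR (S k')) by (apply (le_INR 1); lia).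
    assert (0 <= theta (S k')) by (apply Ht; lia).
    assert (0 < z ^ S k') by (apply pow_lt; lra).
    assert (0 < / INR (S k') <= 1).
    { split. apply Rinv_0_lt_compat; lra. rewrite <- Rinv_1. apply Rinv_le_contravar; lra. }
    split.
    + apply Rmult_le_pos; [apply Rmult_le_pos|]; lra.
    + rewrite Rmult_assoc. rewrite <- (Rmult_1_l (theta (S k') * z ^ S k')) at 2.
      apply Rmult_le_compat_r; [apply Rmult_le_pos|]; lra.
  - exists l; exact Hs.
  - exists l'; exact Hl'.
Qed.

Lemma key theta a b m n la lb :
  (forall j, (1 <= j)%nat -> 0 <= theta j) -> 0 < a -> a <= b ->
  infinite_sum (Iterm theta 0 a) m -> infinite_sum (Iterm theta 0 b) n ->
  infinite_sum (Iterm theta (-1) a) la -> infinite_sum (Iterm theta (-1) b) lb ->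
  m * (ln b - ln a) <= lb - la <= n * (ln b - ln a).
Proof.
  intros Ht Ha Hab Sa Sb Sla Slb.
  set (t := ln b - ln a).
  assert (Hb : 0 < b) by lra.
  assert (Ht0 : 0 <= t).
  { unfold t. destruct (Req_dec a b) as [->|]; [lra|].
    assert (ln a < ln b) by (apply ln_increasing; lra). lra. }
  assert (Hea : a = b * exp (- t)).
  { unfold t. replace (- (ln b - ln a)) with (ln a + - ln b) by ring.
    rewrite exp_plus, exp_Ropp, !exp_ln by lra. field. lra. }
  assert (Heb : b = a * exp t).
  { rewrite Hea, Rmult_assoc, <- exp_plus. replace (-t + t) with 0 by ring. rewrite exp_0; ring. }
  assert (Hdiff : Un_cv (fun N => sum_f_R0 (Iterm theta (-1) b) N - sum_f_R0 (Iterm theta (-1) a) N) (lb - la))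
    by (apply CV_minus; assumption).
  split.
  - apply (Rle_cv_lim (Un := fun N => sum_f_R0 (Iterm theta 0 a) N * t)
            (Vn := fun N => sum_f_R0 (Iterm theta (-1) b) N - sum_f_R0 (Iterm theta (-1) a) N)).
    + intros N. rewrite Rmult_comm, scal_sum, <- minus_sum. apply sum_Rle.
      intros k _. destruct k as [|k']. { rewrite !Iterm_zero; lra. }
      rewrite Iterm0, !Itermm1 by lia.
      set (p := INR (S k')). set (c := theta (S k')).
      assert (Hp : 0 < p) by (apply lt_0_INR; lia).
      assert (Hc : 0 <= c) by (apply Ht; lia).
      set (A := a ^ S k'). set (B := b ^ S k').
      assert (HA : 0 < A) by (apply pow_lt; lra).
      assert (HBA : A * (1 + p * t) <= B).
      { unfold B. rewrite Heb, Rpow_mult_distr, exp_pow_nat. fold A p.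
        apply Rmult_le_compat_l; [lra|]. apply exp_ineq1_le. }
      replace (/ p * c * B - / p * c * A) with ((c * / p) * (B - A)) by ring.
      replace (c * A * t) with ((c * / p) * (p * t * A)) by (field; lra).
      apply Rmult_le_compat_l.
      * apply Rmult_le_pos; [lra|]. left; apply Rinv_0_lt_compat; lra.
      * lra.
    + apply CV_mult; [exact Sa|apply cv_const].
    + exact Hdiff.
  - apply (Rle_cv_lim 
            (Un := fun N => sum_f_R0 (Iterm theta (-1) b) N - sum_f_R0 (Iterm theta (-1) a) N)
            (Vn := fun N => sum_f_R0 (Iterm theta 0 b) N * t)).
    + intros N. rewrite (Rmult_comm _ t), scal_sum, <- minus_sum. apply sum_Rle.
      intros k _. destruct k as [|k']. { rewrite !Iterm_zero; lra. }
      rewrite Iterm0, !Itermm1 by lia.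
      set (p := INR (S k')). set (c := theta (S k')).
      assert (Hp : 0 < p) by (apply lt_0_INR; lia).
      assert (Hc : 0 <= c) by (apply Ht; lia).
      set (A := a ^ S k'). set (B := b ^ S k').
      assert (HB : 0 < B) by (apply pow_lt; lra).
      assert (HBA : B * (1 + p * (- t)) <= A).
      { unfold A. rewrite Hea, Rpow_mult_distr, exp_pow_nat. fold B p.
        apply Rmult_le_compat_l; [lra|]. apply exp_ineq1_le. }
      replace (/ p * c * B - / p * c * A) with ((c * / p) * (B - A)) by ring.
      replace (c * B * t) with ((c * / p) * (p * t * B)) by (field; lra).
      apply Rmult_le_compat_l.
      * apply Rmult_le_pos; [lra|]. left; apply Rinv_0_lt_compat; lra.
      * lra.
    + exact Hdiff.
    + apply CV_mult; [exact Sb|apply cv_const].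
Qed.

Lemma delta_small (eps : nat -> R) : Un_cv eps 0 ->
  forall e, 0 < e -> exists N : nat, forall n j, (j < n)%nat ->
        (N <= n - j)%nat -> Rabs ((1 + eps n) / (1 + eps (n - j)%nat) - 1) < e.
Proof.
  intros Heps e He.
  destruct (Heps (Rmin (1/2) (e/4))) as [N HN].
  { apply Rmin_pos; lra. }
  exists N. intros n j Hjn HNj.
  assert (H1 := HN n ltac:(lia)). assert (H2 := HN (n - j)%nat ltac:(lia)).
  unfold Rdist in H1, H2. rewrite Rminus_0_r in H1, H2.
  assert (Hm1 := Rmin_l (1/2) (e/4)). assert (Hm2 := Rmin_r (1/2) (e/4)).
  set (en := eps n) in *. set (em := eps (n - j)%nat) in *.
  apply Rabs_def2 in H1. apply Rabs_def2 in H2.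
  assert (Hpos : 1/2 < 1 + em) by lra.
  replace ((1 + en) / (1 + em) - 1) with ((en - em) * / (1 + em)) by (field; lra).
  rewrite Rabs_mult, Rabs_inv, (Rabs_right (1 + em)) by lra.
  assert (Hu : Rabs (en - em) < e / 2) by (apply Rabs_def1; lra).
  assert (Hv : 0 < / (1 + em) < 2).
  { split. apply Rinv_0_lt_compat; lra.
    replace 2 with (/ (1/2)) by field. apply Rinv_lt_contravar; lra. }
  assert (0 <= Rabs (en - em)) by apply Rabs_pos.
  nra.
Qed.

Lemma saddle_nz (E a S c hv : R) : 0 < hv -> hv = E / (a * S) * c -> S <> 0 /\ c <> 0.
Proof.
  intros Hp Hh. split; intro Z; rewrite Z in Hh.
  - unfold Rdiv in Hh. rewrite Rmult_0_r, Rinv_0, Rmult_0_r, Rmult_0_l in Hh. lra.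
  - rewrite Rmult_0_r in Hh; lra.
Qed.

Lemma sqrt_pos_arg (x : R) : sqrt x <> 0 -> 0 < x.
Proof.
  intros H. destruct (Rle_lt_dec x 0) as [Hx|Hx]; [|exact Hx].
  exfalso; apply H, sqrt_neg_0, Hx.
Qed.

Lemma exp_le_gen (x y : R) : x <= y -> exp x <= exp y.
Proof.
  intros H. destruct (Rle_lt_or_eq_dec x y H) as [L|E].
  - left; apply exp_increasing, L.
  - right; rewrite E; reflexivity.
Qed.

Theorem proposition2p3
  (theta : nat -> R) (rho : option R) (r : nat -> R) (eps : nat -> R)
  (Htheta : forall j, (1 <= j)%nat -> 0 <= theta j)
  (Hrad : is_radius theta 0 rho)
  (Hinc : forall x y, 0 <= x -> x < y -> below rho y ->
            I theta 0 x < I theta 0 y)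
  (Hinf : forall M, exists x0, 0 <= x0 /\ below rho x0 /\
            forall x, x0 <= x -> below rho x -> M < I theta 0 x)
  (Hr : forall m, (1 <= m)%nat ->
          0 < r m /\ below rho (r m) /\ I theta 0 (r m) = INR m)
  (Hsaddle : forall m, (1 <= m)%nat ->
      h theta m = exp (I theta (-1) (r m))
                  / (r m ^ m * sqrt (2 * PI * I theta 1 (r m))) * (1 + eps m))
  (Heps : Un_cv eps 0)
  (Hpos : forall m, (1 <= m)%nat -> 0 < h theta m) :
  exists delta : nat -> nat -> R,
    (forall e, 0 < e -> exists N : nat, forall n j, (j < n)%nat ->
        (N <= n - j)%nat -> Rabs (delta n j) < e) /\
    (forall n j, (j < n)%nat ->
       sqrt (I theta 1 (r n) / I theta 1 (r (n - j)%nat)) * r (n - j)%nat ^ j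
         <= h theta (n - j)%nat / h theta n * (1 + delta n j)
       /\ h theta (n - j)%nat / h theta n * (1 + delta n j)
         <= sqrt (I theta 1 (r n) / I theta 1 (r (n - j)%nat)) * r n ^ j).
Proof.
  exists (fun n j => (1 + eps n) / (1 + eps (n - j)%nat) - 1).
  split; [apply delta_small, Heps|].
  intros n j Hjn.
  set (m := (n - j)%nat).
  assert (Hm1 : (1 <= m)%nat) by (unfold m; lia).
  assert (Hn1 : (1 <= n)%nat) by lia.
  destruct (Hr m Hm1) as [Ha [Hba HIa]].
  destruct (Hr n Hn1) as [Hb [Hbb HIb]].
  set (a := r m) in *. set (b := r n) in *.
  assert (Hab : a <= b).
  { destruct (Rle_lt_dec a b) as [H|H]; [exact H|].
    exfalso. assert (X := Hinc b a ltac:(lra) H Hba).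
    rewrite HIa, HIb in X. apply INR_lt in X. unfold m in X. lia. }
  destruct Hrad as [Hrad1 _].
  destruct (Hrad1 a) as [l0a S0a]. { rewrite Rabs_right by lra. exact Hba. }
  destruct (Hrad1 b) as [l0b S0b]. { rewrite Rabs_right by lra. exact Hbb. }
  rewrite (I_val _ _ _ _ S0a) in HIa. rewrite (I_val _ _ _ _ S0b) in HIb. subst l0a l0b.
  destruct (conv_m1 _ _ _ Htheta Ha S0a) as [la Sla].
  destruct (conv_m1 _ _ _ Htheta Hb S0b) as [lb Slb].
  destruct (key _ _ _ _ _ _ _ Htheta Ha Hab S0a S0b Sla Slb) as [K1 K2].
  assert (Hsm := Hsaddle m Hm1). assert (Hsn := Hsaddle n Hn1).
  fold a in Hsm. fold b in Hsn.
  rewrite (I_val _ _ _ _ Sla) in Hsm. rewrite (I_val _ _ _ _ Slb) in Hsn.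
  set (Sa := sqrt (2 * PI * I theta 1 a)) in *.
  set (Sb := sqrt (2 * PI * I theta 1 b)) in *.
  destruct (saddle_nz _ _ _ _ _ (Hpos m Hm1) Hsm) as [NSa Nca].
  destruct (saddle_nz _ _ _ _ _ (Hpos n Hn1) Hsn) as [NSb Ncb].
  assert (PIa := sqrt_pos_arg _ NSa). assert (PIb := sqrt_pos_arg _ NSb).
  assert (Hpi := PI_RGT_0).
  assert (I1a : 0 < I theta 1 a) by nra.
  assert (I1b : 0 < I theta 1 b) by nra.
  assert (Hsq : sqrt (I theta 1 b / I theta 1 a) = Sb / Sa).
  { unfold Sa, Sb. rewrite <- sqrt_div_alt by lra. f_equal. field. lra. }
  assert (Hapos : 0 < a ^ m) by (apply pow_lt; lra).
  assert (Hbpos : 0 < b ^ n) by (apply pow_lt; lra).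
  assert (Heq : h theta m / h theta n * (1 + ((1 + eps n) / (1 + eps m) - 1))
                = Sb / Sa * (exp (la - lb) * b ^ n / a ^ m)).
  { rewrite Hsm, Hsn. unfold Rminus at 2. rewrite exp_plus, exp_Ropp.
    assert (exp la > 0) by apply exp_pos. assert (exp lb > 0) by apply exp_pos.
    field. repeat split; lra. }
  rewrite Heq, Hsq. clear Heq.
  set (S := Sb / Sa).
  assert (HS : 0 <= S) by (unfold S, Sa, Sb; rewrite <- sqrt_div_alt by lra; apply sqrt_pos).
  set (t := ln b - ln a) in *.
  assert (Hea : a = b * exp (- t)).
  { unfold t. replace (- (ln b - ln a)) with (ln a + - ln b) by ring.
    rewrite exp_plus, exp_Ropp, !exp_ln by lra. field. lra. }
  assert (Hna : a ^ n = b ^ n * exp (INR n * - t)).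
  { rewrite Hea at 1. rewrite Rpow_mult_distr, exp_pow_nat. reflexivity. }
  assert (Hma : a ^ m = b ^ m * exp (INR m * - t)).
  { rewrite Hea at 1. rewrite Rpow_mult_distr, exp_pow_nat. reflexivity. }
  assert (E1 : exp (INR n * - t) <= exp (la - lb)).
  { apply exp_le_gen. lra. }
  assert (E2 : exp (la - lb) <= exp (INR m * - t)).
  { apply exp_le_gen. lra. }
  assert (Hbn : b ^ n = b ^ j * b ^ m).
  { rewrite <- pow_add. f_equal. unfold m. lia. }
  assert (Han : a ^ n = a ^ j * a ^ m).
  { rewrite <- pow_add. f_equal. unfold m. lia. }
  assert (Hbj : 0 < b ^ j) by (apply pow_lt; lra).
  assert (Hbm : 0 < b ^ m) by (apply pow_lt; lra).
  split; apply Rmult_le_compat_l; try exact HS.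
  - apply (Rmult_le_reg_r (a ^ m)); [exact Hapos|].
    replace (exp (la - lb) * b ^ n / a ^ m * a ^ m) with (exp (la - lb) * b ^ n) by (field; lra).
    rewrite <- Han, Hna, (Rmult_comm (exp (la - lb))). apply Rmult_le_compat_l; lra.
  - apply (Rmult_le_reg_r (a ^ m)); [exact Hapos|].
    replace (exp (la - lb) * b ^ n / a ^ m * a ^ m) with (exp (la - lb) * b ^ n) by (field; lra).
    rewrite Hma, Hbn.
    replace (b ^ j * (b ^ m * exp (INR m * - t))) with (exp (INR m * - t) * (b ^ j * b ^ m)) by ring.
    apply Rmult_le_compat_r; nra.
Qed.
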